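(* There exists $n_0$ such that for every prime $n\ge n_0$ and every $q\in\{1,\dots,n-1\}$, every eigenvalue of the real symmetric matrix $\mathcal M_{n,q}$ defined below is at most $4-\frac{3}{5n}$.
   Context: For an integer $n\ge 3$ and an integer $q$, $\mathcal M_{n,q}=(a_{jk})_{j,k=0}^{n-1}$ is the $n\times n$ real matrix with diagonal entries $a_{jj}=2\cos\frac{2\pi qj}{n}$, with $a_{j,j+1}=a_{j+1,j}=1$ for $0\le j\le n-2$, $a_{0,n-1}=a_{n-1,0}=1$, and all other entries $0$. It is the matrix of the element $\tilde\Delta_n=x+x^{-1}+y+y^{-1}$ of the group algebra of the finite Heisenberg group $H_n$ in the $n$-dimensional representation $T_q$ given by $T_q(x)u_j=u_{j+1}$, $T_q(y)u_j=e^{2\pi iqj/n}u_j$ (indices mod $n$). *)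

(* Defs.v *)
From HB Require Import structures.
From mathcomp Require Import all_boot all_order all_algebra.
From mathcomp Require Import all_classical all_reals all_analysis.
Set Implicit Arguments. Unset Strict Implicit. Unset Printing Implicit Defensive.
Import Order.TTheory GRing.Theory Num.Theory.
Local Open Scope ring_scope.

Definition Mnq (R : realType) (n q : nat) : 'M[R]_n :=
  \matrix_(j < n, k < n)
    ((if j == k then 2 * cos (2 * pi * q%:R * (nat_of_ord j)%:R / n%:R) else 0) +
     (if (nat_of_ord k == (j.+1 %% n)%N) || (nat_of_ord j == (k.+1 %% n)%N)
      then 1 else 0)).

(* Main.v *)
Require Import Defs.
From HB Require Import structures.
From mathcomp Require Import all_boot all_order all_algebra.
From mathcomp Require Import all_classical all_reals all_analysis.
From mathcomp Require Import ring lra zify.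
Import Order.TTheory GRing.Theory Num.Theory.
Local Open Scope ring_scope.
Section Trig.
Variable R : realType.
Implicit Types x y : R.

Lemma sin_mul_le (k : nat) y : `|sin (k%:R * y)| <= k%:R * `|sin y|.
Proof.
elim: k => [|k IH]; first by rewrite mul0r sin0 normr0 mul0r.
rewrite -addn1 natrD mulrDl mul1r sinD.
apply: (le_trans (ler_normD _ _)).
rewrite !normrM mulrDl mul1r.
apply: lerD.
  apply: (le_trans _ IH).
  by rewrite -[X in _ <= X]mulr1 ler_wpM2l // ?normr_ge0 // cos_max.
by rewrite -[X in _ <= X]mul1r ler_wpM2r // ?normr_ge0 // cos_max.
Qed.

Lemma pi_ge0' : (0 : R) <= pi. Proof. exact: ltW (pi_gt0 R). Qed.

Lemma cos_le_mono x y : 0 <= x -> x <= y -> y <= pi -> cos y <= cos x.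
Proof.
move=> x0 xy ypi.
have [->|lt] := eqVneq x y; first by [].
have xy' : x < y by rewrite lt_neqAle lt xy.
have Hx : x \in `[0, pi] by rewrite in_itv /= x0 (le_trans xy ypi).
have Hy : y \in `[0, pi] by rewrite in_itv /= ypi (le_trans x0 xy).
by apply: ltW; rewrite (ltr_cos Hx Hy).
Qed.

Lemma sin_le_mono x y : - (pi/2) <= x -> x <= y -> y <= pi/2 -> sin x <= sin y.
Proof.
move=> x0 xy ypi.
have [->|lt] := eqVneq x y; first by [].
have xy' : x < y by rewrite lt_neqAle lt xy.
have Hx : x \in `[- (pi/2), pi/2] by rewrite in_itv /= x0 (le_trans xy ypi).
have Hy : y \in `[- (pi/2), pi/2] by rewrite in_itv /= ypi (le_trans x0 xy).
by apply: ltW; rewrite (ltr_sin Hx Hy).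
Qed.

Lemma cos_pi8 : 17/20 <= cos (pi / 8 : R) ^+ 2 /\ 0 <= cos (pi / 8 : R).
Proof.
have pi0 := pi_gt0 R.
have c4 : cos (pi / 2) = cos (pi/4 : R) ^+ 2 *+ 2 - 1.
  by rewrite -(cos_mulr2n (pi/4 : R)); congr cos; rewrite -mulr_natr; field.
have c8 : cos (pi / 4) = cos (pi/8 : R) ^+ 2 *+ 2 - 1.
  by rewrite -(cos_mulr2n (pi/8 : R)); congr cos; rewrite -mulr_natr; field.
rewrite cos_pihalf in c4.
have c4p : 0 <= cos (pi/4 : R).
  apply: (@cos_ge0_pihalf R); apply/andP; split; lra.
have c8p : 0 <= cos (pi/8 : R).
  apply: (@cos_ge0_pihalf R); apply/andP; split; lra.
split => //.
move: c4 c8; rewrite !mulr2n => c4 c8.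
have h : 7/10 <= cos (pi/4 : R) by nra.
nra.
Qed.

Lemma weight_small (e n : nat) : (0 < e)%N -> (8 * e <= n)%N ->
  (68/5) * (e%:R / n%:R) ^+ 2 <= 2 - 2 * cos (2 * pi * e%:R / n%:R) :> R.
Proof.
move=> e0 en.
have n0 : (0 < n)%N by lia.
have n0R : (0 : R) < n%:R by rewrite ltr0n.
set a : R := e%:R / n%:R.
have a0 : 0 < a by rewrite divr_gt0 // ltr0n.
have a8 : 8 * a <= 1.
  rewrite /a mulrA ler_pdivrMr // mul1r.
  by rewrite -(natrM R 8) ler_nat.
have pi0 := pi_gt0 R.
set k := (n %/ (2 * e))%N.
have k1 : (1 <= k)%N by rewrite divn_gt0; lia.
have kle : (k * (2 * e) <= n)%N by apply: leq_trunc_div.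
have kgt : (n < k.+1 * (2 * e))%N by apply: ltn_ceil; lia.
have kleR : k%:R * (2 * a) <= 1.
  have -> : k%:R * (2 * a) = (k * (2 * e))%:R / n%:R by rewrite /a !natrM !mulrA.
  by rewrite ler_pdivrMr // mul1r ler_nat.
have kgtR : 1 <= (k%:R + 1) * (2 * a).
  have -> : (k%:R + 1) * (2 * a) = (k.+1 * (2 * e))%:R / n%:R.
    by rewrite /a !natrM !mulrA natr1.
  by rewrite ler_pdivlMr // mul1r ler_nat ltnW.
have k1R : 1 <= k%:R :> R by rewrite ler1n.
set y := pi * a.
have -> : 2 * pi * e%:R / n%:R = y *+ 2 by rewrite /y /a -mulr_natr; field; lra.
rewrite cos_mulr2n cos2sin2.
have y0 : 0 <= y by rewrite /y; nra.
have ypi8 : y <= pi / 8 by rewrite /y; nra.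
have sy0 : 0 <= sin y by apply: sin_ge0_pi; apply/andP; split => //; nra.
have [c8a c8b] := cos_pi8.
have cy : cos (pi / 8) <= cos y by apply: cos_le_mono => //; nra.
have sk : cos y <= sin (k%:R * y).
  rewrite -[cos y]opprK -sinBpihalf -sinN opprB.
  apply: sin_le_mono; rewrite /y; nra.
have hk := sin_mul_le k y.
rewrite (ger0_norm sy0) in hk.
have hk2 : cos y <= k%:R * sin y.
  by apply: (le_trans sk); apply: (le_trans (ler_norm _)); exact hk.
have hs : cos y * (2 * a) <= sin y.
  have h1 : cos y * (2 * a) <= k%:R * sin y * (2 * a).
    by rewrite ler_wpM2r //; lra.
  have h2 : 0 <= sin y * (1 - k%:R * (2 * a)) by apply: mulr_ge0 => //; lra.
  lra.
have cy0 : 0 <= cos y by lra.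
have hc2 : cos (pi/8) ^+ 2 <= cos y ^+ 2 by rewrite ler_sqr ?nnegrE.
have hac : 0 <= cos y * (2 * a) by apply: mulr_ge0 => //; lra.
have hs2 : (cos y * (2 * a)) ^+ 2 <= sin y ^+ 2 by rewrite ler_sqr ?nnegrE.
have ha : 17/20 * (4 * a ^+ 2) <= cos y ^+ 2 * (4 * a ^+ 2).
  rewrite ler_wpM2r //; first by rewrite mulr_ge0 // ?sqr_ge0.
  lra.
rewrite mulr2n.
have e2 : (cos y * (2 * a)) ^+ 2 = cos y ^+ 2 * (4 * a ^+ 2).
  by rewrite exprMn expr2 expr2 expr2; ring.
rewrite e2 in hs2.
lra.
Qed.
End Trig.
Section Weight.
Variable R : realType.

Lemma cos_addK (x : R) (K : nat) : cos (x + pi *+ 2 * K%:R) = cos x.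
Proof.
elim: K => [|K IH]; first by rewrite mulr0 addr0.
by rewrite -natr1 mulrDr mulr1 addrA cosD2pi.
Qed.

Lemma weight_bound (n q i T : nat) : (0 < n)%N -> (8 * T <= n)%N ->
  (68/5) * ((minn (minn ((q * i) %% n) (n - (q * i) %% n)) T)%:R / n%:R) ^+ 2
    <= 2 - 2 * cos (2 * pi * q%:R * i%:R / n%:R) :> R.
Proof.
move=> n0 Tn.
have n0R : (0 : R) < n%:R by rewrite ltr0n.
have pi0 := pi_gt0 R.
set r := ((q * i) %% n)%N.
have rn : (r < n)%N by rewrite ltn_mod.
have -> : cos (2 * pi * q%:R * i%:R / n%:R) = cos (2 * pi * r%:R / n%:R :> R).
  rewrite [in LHS](_ : 2 * pi * q%:R * i%:R / n%:R =
     2 * pi * r%:R / n%:R + pi *+ 2 * ((q * i) %/ n)%N%:R); first by rewrite cos_addK.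
  have e : (q * i)%:R = ((q * i) %/ n)%N%:R * n%:R + r%:R :> R by rewrite -natrM -natrD -divn_eq.
  rewrite natrM in e.
  have -> : 2 * pi * q%:R * i%:R / n%:R = 2 * pi * (q%:R * i%:R) / n%:R :> R by rewrite !mulrA.
  rewrite e -mulr_natr; field; lra.
set d := minn r (n - r).
have -> : cos (2 * pi * r%:R / n%:R) = cos (2 * pi * d%:R / n%:R :> R).
  rewrite /d /minn; case: ifP => // _.
  rewrite natrB; last by apply: ltnW.
  rewrite (_ : 2 * pi * (n%:R - r%:R) / n%:R = - (2 * pi * r%:R / n%:R) + pi *+ 2).
    by rewrite cosD2pi cosN.
  by rewrite mulr2n; field; lra.
have d2 : (2 * d <= n)%N by rewrite /d; lia.
set e := minn d T.
have ed : (e <= d)%N by rewrite /e geq_minl.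
have e8 : (8 * e <= n)%N by rewrite /e; lia.
have cmono : cos (2 * pi * d%:R / n%:R) <= cos (2 * pi * e%:R / n%:R :> R).
  apply: cos_le_mono.
  - by apply: divr_ge0 => //; apply: mulr_ge0 => //; lra.
  - rewrite ler_pM2r ?invr_gt0 // ler_pM2l ?ler_nat //; lra.
  - rewrite ler_pdivrMr //.
    have : (2 * d)%:R <= n%:R :> R by rewrite ler_nat.
    rewrite natrM => h; nra.
case: (posnP e) => [e0|e0].
  rewrite e0 mul0r expr0n /= mulr0.
  have := cos_le1 (2 * pi * d%:R / n%:R : R); lra.
have := @weight_small R e n e0 e8; lra.
Qed.
End Weight.
Section NatPart.
Local Open Scope nat_scope.
Definition dd (n q i : nat) := minn ((q * i) %% n) (n - (q * i) %% n).

Lemma modinj n q i j : prime n -> (0 < q < n)%N -> (i <= j)%N -> (j < i + n)%N ->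
  (q * i) %% n = (q * j) %% n -> i = j.
Proof.
move=> pn qn ij jn e.
have : (q * j == q * i %[mod n]) by rewrite e.
rewrite eqn_mod_dvd; last by rewrite leq_mul2l ij orbT.
rewrite -mulnBr Euclid_dvdM // => /orP [h|h].
  have := dvdn_leq _ h; lia.
case: (posnP (j - i)) => [z|p]; first by lia.
have := dvdn_leq p h; lia.
Qed.

Lemma count_close n q s l t : prime n -> (0 < q < n)%N -> (l <= n)%N ->
  (\sum_(s <= i < s + l) (dd n q i <= t) <= t.*2.+1)%N.
Proof.
move=> pn qn ln.
have n0 : (0 < n)%N by apply: prime_gt0.
rewrite big_mkcond /=.
have -> : \sum_(s <= i < s + l) (if true then nat_of_bool (dd n q i <= t) else 0%N)
   = \sum_(i <- iota s l | dd n q i <= t) 1%N.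
  rewrite /index_iota addKn [RHS]big_mkcond /=.
  by apply: eq_bigr => i _; case: (dd n q i <= t).
rewrite sum1_count -size_filter.

set f := [seq j <- iota s l | dd n q j <= t].
have uf : uniq (map (fun i => (q * i) %% n) f).
  rewrite map_inj_in_uniq; first by rewrite filter_uniq // iota_uniq.
  move=> i j; rewrite !mem_filter !mem_iota => /andP[_ hi] /andP[_ hj] e.
  case: (leqP i j) => h.
    by apply: (modinj _ _ _ _ pn qn h) => //; lia.
  apply/esym; apply: (modinj _ _ _ _ pn qn (ltnW h)) => //; lia.
have sub : {subset map (fun i => (q * i) %% n) f <= iota 0 t.+1 ++ iota (n - t) t}.
  move=> y /mapP [i]; rewrite mem_filter => /andP [hi _] ->.
  rewrite mem_cat !mem_iota.
  have := ltn_pmod (q * i) n0.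
  move: hi; rewrite /dd; lia.
have := uniq_leq_size uf sub.
by rewrite size_map size_cat !size_iota; lia.
Qed.
End NatPart.
Section NatPart2.
Local Open Scope nat_scope.

Lemma sq_layers d T : minn d T ^ 2 = \sum_(t < T) (t < d) * t.*2.+1.
Proof.
elim: T => [|T IH]; first by rewrite big_ord0 minn0.
rewrite big_ord_recr /= -IH.
have [h|h] := ltnP T d.
  have -> : minn d T.+1 = T.+1 by lia.
  rewrite mul1n -addnn; nia.
have -> : minn d T.+1 = d by lia.
by rewrite mul0n addn0.
Qed.

Lemma closed_form l T : T.*2 <= l ->
  3 * (\sum_(t < T) t.*2.+1 * (l - t.*2.+1)) + 4 * T ^ 3 = 3 * l * T ^ 2 + T.
Proof.
elim: T => [|T IH] h; first by rewrite big_ord0 !muln0.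
rewrite big_ord_recr /=.
have h' : T.*2 <= l by rewrite doubleS in h; lia.
have := IH h'.
set S := \sum_(t < T) _.
have [m ->] : exists m, l = m + T.*2.+1 by exists (l - T.*2.+1); rewrite subnK //; rewrite doubleS in h; lia.
rewrite addnK -!addnn.
rewrite !expnS !expn0 !muln1.
lia.
Qed.

Lemma G_bound n q s l T : prime n -> (0 < q < n) -> l <= n -> T.*2 <= l ->
  3 * l * T ^ 2 <= 3 * (\sum_(s <= i < s + l) minn (dd n q i) T ^ 2) + 4 * T ^ 3.
Proof.
move=> pn qn ln Tl.
have -> : \sum_(s <= i < s + l) minn (dd n q i) T ^ 2
   = \sum_(t < T) t.*2.+1 * \sum_(s <= i < s + l) (t < dd n q i).
  under eq_bigr do rewrite sq_layers.
  rewrite exchange_big /=; apply: eq_bigr => t _.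
  rewrite big_distrr /=; apply: eq_bigr => i _; by rewrite mulnC.
have cnt : forall t, l - t.*2.+1 <= \sum_(s <= i < s + l) (t < dd n q i).
  move=> t.
  have e : \sum_(s <= i < s + l) ((t < dd n q i) + (dd n q i <= t)) = l.
    rewrite (eq_bigr (fun _ => 1)); last by move=> i _; case: ltnP.
    by rewrite sum_nat_const_nat addKn muln1.
  rewrite big_split /= in e.
  have := count_close n q s l t pn qn ln.
  lia.
have le : \sum_(t < T) t.*2.+1 * (l - t.*2.+1) <=
   \sum_(t < T) t.*2.+1 * \sum_(s <= i < s + l) (t < dd n q i).
  by apply: leq_sum => t _; rewrite leq_mul2l cnt orbT.
have := closed_form l T Tl.
lia.
Qed.
End NatPart2.
Section NatPart3.
Local Open Scope nat_scope.
Definition hd l k := \sum_(0 <= i < l) ((i - k) + (k - i)).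

Lemma hd_low l k : l <= k -> 2 * hd l k + l * l = l * (2 * k + 1).
Proof.
elim: l => [|l IH] h; first by rewrite /hd big_geq.
rewrite /hd big_nat_recr //= -/(hd l k).
have := IH (ltnW h).
have -> : l - k = 0 by lia.
nia.
Qed.

Lemma hd_high k m : 2 * hd (k + m) k = k * k.+1 + m * (m - 1).
Proof.
elim: m => [|m IH].
  rewrite addn0 muln0 addn0.
  have := hd_low k k (leqnn k); nia.
rewrite addnS /hd big_nat_recr //= -/(hd (k + m) k).
have -> : k - (k + m) = 0 by lia.
rewrite mulnDr IH addKn.
case: m {IH} => [|m]; first by lia.
rewrite subn1 /= addn0.
have -> : m.+2 - 1 = m.+1 by lia.
nia.
Qed.

Lemma hd_le l k : k < l -> 2 * hd l k <= l * l.
Proof.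
move=> kl.
have [m em] : exists m, l = k + m by exists (l - k); lia.
subst l.
rewrite hd_high.
case: m kl => [|m] kl; first by lia.
rewrite subSS subn0. nia.
Qed.
End NatPart3.
Section Window.
Variable R : realType.
Implicit Types f w : nat -> R.

Lemma path_cs f a m :
  (f a - f (a + m)%N) ^+ 2 <= m%:R * \sum_(a <= j < a + m) (f j - f j.+1) ^+ 2.
Proof.
elim: m => [|m IH]; first by rewrite addn0 subrr expr0n /= mul0r.
case: m IH => [|m] IH.
  by rewrite addn1 big_nat1 mul1r.
rewrite addnS big_nat_recr /=; last by apply: leq_addr.
set A := \sum_(a <= j < a + m.+1) _.
set u := f a - f (a + m.+1)%N.
set d := f (a + m.+1)%N - f (a + m.+1).+1.
have -> : f a - f (a + m.+1).+1 = u + d by rewrite /u /d; ring.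
have {}IH : u ^+ 2 <= m.+1%:R * A by exact: IH.
have A0 : 0 <= A by apply: sumr_ge0 => j _; apply: sqr_ge0.
have mR : (0 : R) < m.+1%:R by rewrite ltr0n.
have key : 0 <= A + m.+1%:R * d ^+ 2 - 2 * u * d.
  have h : 0 <= m.+1%:R * (A + m.+1%:R * d ^+ 2 - 2 * u * d).
    have := sqr_ge0 (m.+1%:R * d - u); rewrite !expr2 => hh.
    rewrite !expr2 in IH *; nra.
  by rewrite pmulr_rge0 in h.
rewrite -(@natr1 R m.+1) !expr2 in IH key *; nra.
Qed.

Lemma sub_sum_le (F : nat -> R) a b l : (forall j, 0 <= F j) -> (a <= b)%N -> (b <= l)%N ->
  \sum_(a <= j < b) F j <= \sum_(0 <= j < l) F j.
Proof.
move=> F0 ab bl.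
rewrite (big_cat_nat (leq0n a) (leq_trans ab bl)) /=.
rewrite (big_cat_nat ab bl) /=.
have h1 : 0 <= \sum_(0 <= j < a) F j by apply: sumr_ge0.
have h2 : 0 <= \sum_(b <= j < l) F j by apply: sumr_ge0.
lra.
Qed.

Definition Dsum f l := \sum_(0 <= j < l) (f j - f j.+1) ^+ 2.

Lemma Dsum_ge0 f l : 0 <= Dsum f l.
Proof. by apply: sumr_ge0 => j _; apply: sqr_ge0. Qed.

Lemma pair_le f l i k : (i < l)%N -> (k < l)%N ->
  (f i - f k) ^+ 2 <= ((i - k) + (k - i))%N%:R * Dsum f l.
Proof.
move=> il kl.
have gen : forall a b, (a <= b)%N -> (b < l)%N ->
    (f a - f b) ^+ 2 <= (b - a)%N%:R * Dsum f l.
  move=> a b ab bl.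
  have [m em] : exists m, b = (a + m)%N by exists (b - a)%N; lia.
  subst b.
  apply: (le_trans (path_cs f a m)).
  rewrite addKn ler_wpM2l //.
  apply: sub_sum_le; [by move=> j; apply: sqr_ge0 | apply: leq_addr | lia].
case: (leqP i k) => h.
  have -> : (i - k)%N = 0%N by lia.
  by rewrite add0n; apply: gen.
have -> : (k - i)%N = 0%N by lia.
rewrite addn0 -sqrrN opprB; apply: gen => //; exact: ltnW.
Qed.

Lemma sum_pair_le f l k : (k < l)%N ->
  2 * \sum_(0 <= i < l) (f i - f k) ^+ 2 <= (l * l)%N%:R * Dsum f l.
Proof.
move=> kl.
have h : \sum_(0 <= i < l) (f i - f k) ^+ 2 <= (hd l k)%:R * Dsum f l.
  rewrite /hd natr_sum mulr_suml.
  apply: ler_sum_nat => i /andP [_ il].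
  exact: pair_le.
have h2 : (2 * hd l k)%N%:R <= (l * l)%N%:R :> R by rewrite ler_nat hd_le.
rewrite natrM in h2.
have D0 := Dsum_ge0 f l.
have : 2%:R * (hd l k)%:R * Dsum f l <= (l * l)%N%:R * Dsum f l by rewrite ler_wpM2r.
nra.
Qed.

Lemma window f w l : (forall i, 0 <= w i) ->
  (\sum_(0 <= i < l) w i) * (\sum_(0 <= i < l) f i ^+ 2) <=
  2 * l%:R * (\sum_(0 <= i < l) w i * f i ^+ 2)
  + (l * l)%N%:R * (\sum_(0 <= i < l) w i) * Dsum f l.
Proof.
move=> w0.
rewrite mulr_suml.
have -> : 2 * l%:R * (\sum_(0 <= i < l) w i * f i ^+ 2)
  + (l * l)%N%:R * (\sum_(0 <= i < l) w i) * Dsum f l =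
  \sum_(0 <= k < l) (2 * l%:R * (w k * f k ^+ 2) + (l * l)%N%:R * w k * Dsum f l).
  by rewrite big_split /= -mulr_sumr -mulr_suml -mulr_sumr.
apply: ler_sum_nat => k /andP [_ kl].
have h1 : \sum_(0 <= i < l) f i ^+ 2 <=
     \sum_(0 <= i < l) (2 * f k ^+ 2 + 2 * (f i - f k) ^+ 2).
  apply: ler_sum_nat => i _.
  have := sqr_ge0 (f i - 2 * f k); rewrite !expr2 => hh; nra.
rewrite big_split /= sumr_const_nat subn0 -mulr_sumr in h1.
have h2 := sum_pair_le f l k kl.
have D0 := Dsum_ge0 f l.
have wk := w0 k.
have e : (2 * f k ^+ 2) *+ l = 2 * l%:R * f k ^+ 2 by rewrite mulr_natr; ring.
rewrite e in h1.
have : w k * \sum_(0 <= i < l) f i ^+ 2 <=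
   w k * (2 * l%:R * f k ^+ 2 + (l * l)%N%:R * Dsum f l) by rewrite ler_wpM2l //; lra.
nra.
Qed.
End Window.
Section NatPart4.
Local Open Scope nat_scope.

Lemma isqrt4 N : exists m, 4 * m ^ 2 <= N < 4 * m.+1 ^ 2.
Proof.
elim: N => [|N [m /andP [h1 h2]]]; first by exists 0.
case: (leqP (4 * m.+1 ^ 2) N.+1) => h.
  exists m.+1; apply/andP; split => //.
  have : N.+1 <= 4 * m.+1 ^ 2 by lia.
  rewrite !expnS !expn0 !muln1; nia.
by exists m; apply/andP; split => //; lia.
Qed.

Lemma params n m : 100 * 100 <= n -> 4 * m ^ 2 <= 3 * n -> 3 * n < 4 * m.+1 ^ 2 ->
  let L := n %/ m in let T := L./2 in
  [/\ 0 < m, 9 * n <= 34 * T ^ 2, 3 * (L.+1) ^ 2 <= 5 * n, T.*2 <= L &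
      [/\ L.+1 <= n, 8 * T <= n & 0 < L]].
Proof.
move=> n0 h1 h2 L T.
rewrite !expnS !expn0 !muln1 in h1 h2 *.
have m86 : 86 <= m.
  case: (leqP 86 m) => // hm.
  have : m.+1 * m.+1 <= 86 * 86 by apply: leq_mul.
  lia.
have m0 : 0 < m by lia.
have hL1 : L * m <= n by apply: leq_trunc_div.
have hL2 : n < L.+1 * m by apply: ltn_ceil.
have hT : T.*2 <= L <= T.*2.+1.
  by rewrite /T -{1 3}(odd_double_half L); case: (odd L) => /=; lia.
have a1 : n < (2 * T + 2) * m by move: hT; rewrite -addnn; nia.
have a2 : n * n < 3 * ((T + 1) * (T + 1)) * n.
  have : n * n < ((2 * T + 2) * m) * ((2 * T + 2) * m) by nia.
  nia.
have a3 : n < 3 * ((T + 1) * (T + 1)) by nia.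
have T9 : 57 <= T by nia.
have ha : 9 * n <= 34 * (T * T) by nia.
have b1 : 64 * m + 24 <= 3 * n by nia.
have b2 : 3 * ((n + m) * (n + m)) <= 5 * n * (m * m) by nia.
have b3 : (L.+1 * m) <= n + m by lia.
have hb : 3 * (L.+1 * L.+1) <= 5 * n.
  have c1 := leq_mul b3 b3.
  have c2 : 3 * (L.+1 * L.+1) * (m * m) <= 5 * n * (m * m).
    have -> : 3 * (L.+1 * L.+1) * (m * m) = 3 * ((L.+1 * m) * (L.+1 * m)) by ring.
    lia.
  by rewrite leq_pmul2r ?muln_gt0 ?m0 in c2.
split => //; first by lia.
split; [nia | | nia].
have c3 : 27 * n <= n * n by apply: leq_mul; lia.
have c4 : 4 * L <= n.
  case: (leqP (4 * L) n) => // hc.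
  have := ltn_mul hc hc; lia.
move: hT; rewrite -addnn => hT; lia.
Qed.
End NatPart4.
Arguments Dsum {R} f l.
Arguments window {R} f w l.
Arguments Dsum_ge0 {R} f l.
Section Main.
Variable R : realType.

Definition wt (n q i : nat) : R := 2 - 2 * cos (2 * pi * q%:R * i%:R / n%:R).

Lemma wt_ge0 n q i : 0 <= wt n q i.
Proof. rewrite /wt; have := cos_le1 (2 * pi * q%:R * i%:R / n%:R : R); lra. Qed.

Lemma shift_sum (F : nat -> R) s l :
  \sum_(s <= i < s + l) F i = \sum_(0 <= j < l) F (j + s)%N.
Proof. by rewrite -{1}(add0n s) big_addn addKn. Qed.

Lemma window_claim n q (X : nat -> R) s l T : prime n -> (0 < q < n)%N -> (l <= n)%N ->
  (T.*2 <= l)%N -> (8 * T <= n)%N -> (0 < l)%N -> (9 * n <= 34 * T ^ 2)%N ->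
  (3 * l ^ 2 <= 5 * n)%N ->
  3 * \sum_(s <= i < s + l) X i ^+ 2 <=
  5 * n%:R * (\sum_(s <= i < s + l) wt n q i * X i ^+ 2 +
              \sum_(s <= i < s + l) (X i - X i.+1) ^+ 2).
Proof.
move=> pn qn ln Tl T8 l0 hT hl.
have n0 : (0 < n)%N by apply: prime_gt0.
have n0R : (0 : R) < n%:R by rewrite ltr0n.
rewrite (shift_sum _ s) (shift_sum _ s) (shift_sum _ s).
set f := fun j => X (j + s)%N.
set w := fun j => wt n q (j + s)%N.
have eD : \sum_(0 <= j < l) (X (j + s)%N - X (j + s).+1) ^+ 2 = Dsum f l.
  by rewrite /Dsum; apply: eq_bigr => j _; rewrite /f addSn.
rewrite eD.
set S := \sum_(0 <= j < l) X (j + s)%N ^+ 2.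
set P := \sum_(0 <= j < l) wt n q (j + s) * X (j + s)%N ^+ 2.
set W := \sum_(0 <= j < l) w j.
have hw := window f w l (fun i => wt_ge0 n q (i + s)).
rewrite -/W in hw.
have eS : \sum_(0 <= i < l) f i ^+ 2 = S by [].
rewrite eS in hw.
have eP : \sum_(0 <= i < l) w i * f i ^+ 2 = P by [].
rewrite eP in hw.
set D := Dsum f l.
have D0 : 0 <= D by apply: Dsum_ge0.
have P0 : 0 <= P by apply: sumr_ge0 => j _; apply: mulr_ge0; [apply: wt_ge0 | apply: sqr_ge0].
set G := (\sum_(s <= i < s + l) minn (dd n q i) T ^ 2)%N.
have hG := G_bound n q s l T pn qn ln Tl.
rewrite -/G in hG.
have hWG : (68/5) * (G%:R / n%:R ^+ 2) <= W.
  rewrite /G natr_sum (shift_sum _ s) mulr_suml mulr_sumr.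
  apply: ler_sum_nat => j _.
  have := weight_bound R n q (j + s) T n0 T8.
  have hX := natrX R (minn (dd n q (j + s)) T) 2.
  rewrite /w /wt hX /dd expr_div_n //.
have hGR : 3 * l%:R * T%:R ^+ 2 <= 3 * G%:R + 4 * T%:R ^+ 3 :> R.
  have := hG; rewrite -(ler_nat R) !natrD !natrM => h.
  rewrite expr2 exprS expr2; lra.
have hTR : 9 * n%:R <= 34 * T%:R ^+ 2 :> R.
  have := hT; rewrite -(ler_nat R) !natrM => h.
  rewrite !expr2; lra.
have hlR : 3 * l%:R ^+ 2 <= 5 * n%:R :> R.
  have := hl; rewrite -(ler_nat R) !natrM => h.
  rewrite !expr2; lra.
have TlR : 2 * T%:R <= l%:R :> R.
  by have := Tl; rewrite -(ler_nat R) -muln2 natrM mulrC.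
have l1 : 1 <= l%:R :> R by rewrite ler1n.
have T0 : 0 <= T%:R :> R by [].
have key : 18 * l%:R * n%:R <= 204 * G%:R :> R.
  have p1 : 0 <= (l%:R - 2 * T%:R) * (204 * T%:R ^+ 2 - 18 * n%:R) :> R.
    by apply: mulr_ge0; lra.
  have p2 : 0 <= T%:R * (34 * T%:R ^+ 2 - 9 * n%:R) :> R by apply: mulr_ge0; lra.
  rewrite !expr2 in p1 p2 hGR hTR *; rewrite exprS expr2 in hGR; nra.
have W2 : 6 * l%:R <= 5 * n%:R * W.
  have : 5 * n%:R * ((68/5) * (G%:R / n%:R ^+ 2)) <= 5 * n%:R * W.
    by rewrite ler_wpM2l //; lra.
  have -> : 5 * n%:R * ((68/5) * (G%:R / n%:R ^+ 2)) = 68 * G%:R / n%:R :> R.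
    by field; rewrite gt_eqF.
  move=> h; apply: le_trans h.
  rewrite ler_pdivlMr //; lra.
have W0 : 0 < W by nra.
rewrite natrM in hw.
have {}hw : W * S <= 2 * l%:R * P + l%:R * l%:R * W * D by exact: hw.
have h3 : 3 * (W * S) <= 5 * n%:R * W * (P + D).
  have a1 : 3 * (2 * l%:R * P) <= 5 * n%:R * W * P.
    have := ler_wpM2r P0 W2; lra.
  have a2 : 3 * (l%:R * l%:R * W * D) <= 5 * n%:R * W * D.
    have := mulr_ge0 (ltW W0) D0.
    rewrite expr2 in hlR; nra.
  have hw3 : 3 * (W * S) <= 3 * (2 * l%:R * P) + 3 * (l%:R * l%:R * W * D) by lra.
  rewrite mulrDr; lra.
have : W * (3 * S) <= W * (5 * n%:R * (P + D)) by lra.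
by rewrite ler_pM2l.
Qed.
End Main.
Section Main2.
Variable R : realType.

Lemma part_sum (F : nat -> R) n m : (0 < m)%N ->
  \sum_(0 <= i < n) F i = \sum_(0 <= k < m) \sum_(k * n %/ m <= i < k.+1 * n %/ m) F i.
Proof.
move=> m0.
have gen : forall j, \sum_(0 <= i < j * n %/ m) F i =
    \sum_(0 <= k < j) \sum_(k * n %/ m <= i < k.+1 * n %/ m) F i.
  elim => [|j IH]; first by rewrite mul0n div0n !big_geq.
  rewrite big_nat_recr //= -IH.
  rewrite (@big_cat_nat _ _ _ (j * n %/ m)) //.
  by apply: leq_div2r; rewrite leq_mul2r leqnSn orbT.
by rewrite -gen mulKn.
Qed.

Lemma main_ineq n q (X : nat -> R) : prime n -> (100 * 100 <= n)%N -> (0 < q < n)%N ->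
  3 * \sum_(0 <= i < n) X i ^+ 2 <=
  5 * n%:R * (\sum_(0 <= i < n) wt R n q i * X i ^+ 2 +
              \sum_(0 <= i < n) (X i - X i.+1) ^+ 2).
Proof.
move=> pn n0 qn.
have [m /andP [h1 h2]] := isqrt4 (3 * n)%N.
have [m0 hT hb hT2 [Ln T8 L0]] := params n m n0 h1 h2.
set L := (n %/ m)%N in hT hb hT2 Ln T8 L0.
set T := L./2 in hT hb hT2 Ln T8 L0.
rewrite (part_sum (fun i => X i ^+ 2) n m m0) (part_sum (fun i => wt R n q i * X i ^+ 2) n m m0).
rewrite (part_sum (fun i => (X i - X i.+1) ^+ 2) n m m0).
rewrite -big_split /= mulr_sumr mulr_sumr.
apply: ler_sum_nat => k /andP [_ km].
set s := (k * n %/ m)%N.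
have hs : (k.+1 * n %/ m = s + (L + (m <= k * n %% m + n %% m)))%N.
  by rewrite mulSnr divnD // addnA.
set l := (L + (m <= k * n %% m + n %% m))%N in hs.
have lL : (L <= l <= L.+1)%N by rewrite /l; case: (m <= _)%N => /=; lia.
rewrite hs.
apply: (@window_claim R n q X s l T) => //; try lia.
Qed.
End Main2.
Section Matrix.
Variable R : realType.

Lemma shift_cyc (F : nat -> R) n : F n = F 0%N ->
  \sum_(0 <= i < n) F i.+1 = \sum_(0 <= i < n) F i.
Proof.
case: n => [|n] h; first by rewrite !big_geq.
by rewrite big_nat_recr //= [RHS]big_nat_recl //= h addrC.
Qed.

Lemma sum_if_eq n (F : 'I_n -> R) (b : 'I_n) :
  \sum_(k < n) (if k == b then F k else 0) = F b.
Proof. by rewrite -big_mkcond /= big_pred1_eq. Qed.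

Lemma quad_form n q (v : 'rV[R]_n.+1) a : (2 < n.+1)%N ->
  v *m Mnq R n.+1 q = a *: v ->
  a * \sum_(0 <= i < n.+1) v ord0 (inord (i %% n.+1)) ^+ 2 =
  4 * \sum_(0 <= i < n.+1) v ord0 (inord (i %% n.+1)) ^+ 2 -
  (\sum_(0 <= i < n.+1) wt R n.+1 q i * v ord0 (inord (i %% n.+1)) ^+ 2 +
   \sum_(0 <= i < n.+1) (v ord0 (inord (i %% n.+1)) - v ord0 (inord (i.+1 %% n.+1))) ^+ 2).
Proof.
move=> n3 ev.
set N := n.+1.
set X := fun i => v ord0 (inord (i %% N)).
have vX : forall k : 'I_N, v ord0 k = X k.
  by move=> k; rewrite /X modn_small // inord_val.
have vS : forall k : 'I_N, v ord0 (ordS k) = X k.+1.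
  by move=> k; rewrite /X; congr (v _ _); apply: val_inj; rewrite /= inordK // ltn_mod.
set c := fun i : nat => 2 * cos (2 * pi * q%:R * i%:R / N%:R) : R.
have Mjk : forall j k : 'I_N, Mnq R N q j k =
   (if j == k then c j else 0) + (if k == ordS j then 1 else 0) + (if j == ordS k then 1 else 0).
  move=> j k; rewrite /Mnq mxE -addrA; congr (_ + _).
  have e1 : (k == ordS j) = (nat_of_ord k == (j.+1 %% N)%N) by [].
  have e2 : (j == ordS k) = (nat_of_ord j == (k.+1 %% N)%N) by [].
  rewrite e1 e2.
  case: (eqVneq (nat_of_ord k) (j.+1 %% N)%N) => h1; case: (eqVneq (nat_of_ord j) (k.+1 %% N)%N) => h2 /=;
    rewrite ?addr0 ?add0r //.
  exfalso; have jl := ltn_ord j; have kl := ltn_ord k; move: h1 h2.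
  case: (ltnP j.+1 N) => a1; first (rewrite (modn_small a1)); last first.
    have -> : j.+1 = N by lia.
    rewrite modnn => -> /=; rewrite modn_small //; lia.
  move=> -> .
  case: (ltnP j.+2 N) => a2; first by rewrite modn_small //; lia.
  have -> : j.+2 = N by lia.
  rewrite modnn; lia.
have e : forall k : 'I_N, a * v ord0 k = \sum_(j < N) v ord0 j * Mnq R N q j k.
  by move=> k; have := congr1 (fun M : 'M[R]_(1, N) => M ord0 k) ev; rewrite !mxE => <-.
have E1 : a * \sum_(k < N) v ord0 k ^+ 2 =
   \sum_(k < N) c k * v ord0 k ^+ 2 + 2 * \sum_(k < N) v ord0 k * v ord0 (ordS k).
  rewrite mulr_sumr.
  have -> : \sum_(k < N) a * v ord0 k ^+ 2 =
    \sum_(k < N) (c k * v ord0 k ^+ 2 + \sum_(j < N) v ord0 k * (v ord0 j * (if k == ordS j then 1 else 0))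
      + v ord0 k * v ord0 (ordS k)).
    apply: eq_bigr => k _.
    rewrite expr2 mulrA [a * _]mulrC -mulrA e mulr_sumr.
    under eq_bigr do rewrite Mjk !mulrDr.
    rewrite !big_split /=.
    congr (_ + _ + _).
    - rewrite (eq_bigr (fun j => if j == k then v ord0 k * (v ord0 k * c k) else 0)).
        by rewrite sum_if_eq; ring.
      by move=> j _; case: eqP => [->|]; rewrite ?mulr0.
    - rewrite (eq_bigr (fun j => if j == ordS k then v ord0 k * v ord0 (ordS k) else 0)).
        by rewrite sum_if_eq.
      by move=> j _; case: eqP => [->|]; rewrite ?mulr1 ?mulr0.
  rewrite !big_split /= mulr2n mulrDl mul1r addrA; congr (_ + _ + _).
  rewrite exchange_big /=; apply: eq_bigr => j _.
  rewrite (eq_bigr (fun k => if k == ordS j then v ord0 j * v ord0 (ordS j) else 0)).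
    by rewrite sum_if_eq.
  by move=> k _; case: eqP => [->|]; rewrite ?mulr1 ?mulr0 // mulrC.
have S1 : \sum_(k < N) v ord0 k ^+ 2 = \sum_(0 <= i < N) X i ^+ 2.
  by rewrite big_mkord; apply: eq_bigr => k _; rewrite vX.
have C1 : \sum_(k < N) c k * v ord0 k ^+ 2 = \sum_(0 <= i < N) c i * X i ^+ 2.
  by rewrite big_mkord; apply: eq_bigr => k _; rewrite vX.
have P1 : \sum_(k < N) v ord0 k * v ord0 (ordS k) = \sum_(0 <= i < N) X i * X i.+1.
  by rewrite big_mkord; apply: eq_bigr => k _; rewrite vX vS.
rewrite S1 C1 P1 in E1.
have E2 : \sum_(0 <= i < N) X i.+1 ^+ 2 = \sum_(0 <= i < N) X i ^+ 2.
  by apply: (shift_cyc (fun i => X i ^+ 2)); rewrite /X modnn mod0n.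
have W1 : \sum_(0 <= i < N) wt R N q i * X i ^+ 2 =
    2 * \sum_(0 <= i < N) X i ^+ 2 - \sum_(0 <= i < N) c i * X i ^+ 2.
  rewrite mulr_sumr -sumrB; apply: eq_bigr => i _; by rewrite /wt /c mulrBl.
have D1 : \sum_(0 <= i < N) (X i - X i.+1) ^+ 2 =
    \sum_(0 <= i < N) X i ^+ 2 + \sum_(0 <= i < N) X i.+1 ^+ 2 - 2 * \sum_(0 <= i < N) X i * X i.+1.
  rewrite mulr_sumr -big_split /= -sumrB; apply: eq_bigr => i _ /=; ring.
rewrite -/X W1 D1 E2; lra.
Qed.
End Matrix.
Theorem lemma2p3 (R : realType) :
  exists n0 : nat, forall n q : nat, prime n -> (n0 <= n)%N ->
    (1 <= q <= n.-1)%N ->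
    forall a : R, eigenvalue (Mnq R n q) a -> a <= 4 - 3 / (5 * n%:R).
Proof.
exists (100 * 100)%N => n q pn n0 qn a /eigenvalueP [v ev v0].
case: n pn n0 qn v ev v0 => [|n] pn n0 qn v ev v0; first by [].
have qn' : (0 < q < n.+1)%N by move: qn => /=; lia.
have n3 : (2 < n.+1)%N by lia.
have hq := @quad_form R n q v a n3 ev.
set X := fun i => v ord0 (inord (i %% n.+1)).
have hm := main_ineq R n.+1 q X pn n0 qn'.
set S := \sum_(0 <= i < n.+1) X i ^+ 2 in hm.
set Q := \sum_(0 <= i < n.+1) wt R n.+1 q i * X i ^+ 2 +
         \sum_(0 <= i < n.+1) (X i - X i.+1) ^+ 2 in hm.
have {}hq : a * S = 4 * S - Q by exact: hq.
have [k hk] : exists k : 'I_n.+1, v ord0 k != 0.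
  apply/existsP; apply: contraNT v0 => /existsPn h.
  apply/eqP/matrixP => i j; rewrite ord1 mxE.
  by have := h j; rewrite negbK => /eqP.
have S0 : 0 < S.
  rewrite /S big_mkord (bigD1 k) //=.
  have h1 : 0 < X k ^+ 2.
    rewrite /X modn_small // inord_val.
    by rewrite lt_def sqrf_eq0 hk sqr_ge0.
  have h2 : 0 <= \sum_(i < n.+1 | i != k) X i ^+ 2 by apply: sumr_ge0 => i _; apply: sqr_ge0.
  lra.
have nR : (0 : R) < n.+1%:R by rewrite ltr0n.
set t := 3 / (5 * n.+1%:R).
have ht : 5 * n.+1%:R * t = 3 by rewrite /t; field; rewrite gt_eqF.
have hQ : t * S <= Q.
  have : (5 * n.+1%:R) * (t * S) <= (5 * n.+1%:R) * Q.
    by rewrite mulrA ht.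
  by rewrite ler_pM2l // mulr_gt0.
have : a * S <= (4 - t) * S by lra.
by rewrite ler_pM2r.
Qed.
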